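(* Let $\alpha=[0;a_1,a_2,\dots]$ and $\beta=[0;b_1,b_2,\dots]$ be irrational power series in $\widehat K$ (all $a_i,b_i$ nonconstant polynomials in $R$). Assume there is an integer $n\ge0$ such that $a_i=b_i$ for $i=1,\dots,n$ and $a_{n+1}\ne b_{n+1}$. Then $|\alpha-\beta|=q^{-2\left(\sum_{i=1}^n\deg a_i\right)-\deg a_{n+1}-\deg b_{n+1}+\deg(a_{n+1}-b_{n+1})}.$
   Context: $q$ is a positive power of a prime, $R=\mathbb F_q[Y]$, $\widehat K=\mathbb F_q((Y^{-1}))$ with absolute value $|P/Q|=q^{\deg P-\deg Q}$ extended to $\widehat K$. $[a_0;a_1,a_2,\dots]$ denotes the continued fraction $a_0+1/(a_1+1/(a_2+\cdots))$. *)

(* Defs.v *)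
From HB Require Import structures.
From mathcomp Require Import all_boot all_order all_algebra all_field.
Set Implicit Arguments. Unset Strict Implicit. Unset Printing Implicit Defensive.
Import Order.TTheory GRing.Theory Num.Theory.
Local Open Scope ring_scope.

Section Laurent.
Variable F : finFieldType.

(* A Laurent series  sum_{k >= 0} lcoef k * Y^(lval - k)  in F((Y^{-1})). *)
Record lser := LSer { lval : int ; lcoef : nat -> F }.

Definition coef (x : lser) (m : int) : F :=
  if m <= lval x then lcoef x `|lval x - m|%N else 0.

Definition leq_ser (x y : lser) : Prop := forall m, coef x m = coef y m.

(* series with coefficients f (f m = 0 is assumed for m > v) *)
Definition mkL (v : int) (f : int -> F) : lser :=
  LSer v (fun k : nat => f (v - k%:Z)).

Definition ladd (x y : lser) : lser :=
  mkL (Num.max (lval x) (lval y)) (fun m => coef x m + coef y m).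
Definition lopp (x : lser) : lser := mkL (lval x) (fun m => - coef x m).
Definition lsub (x y : lser) : lser := ladd x (lopp y).
Definition lmul (x y : lser) : lser :=
  LSer (lval x + lval y)
       (fun k => \sum_(i < k.+1) lcoef x i * lcoef y (k - i)).

Definition lpoly (p : {poly F}) : lser :=
  mkL (size p)%:Z (fun m => if (0 <= m) then p`_`|m| else 0).
Definition lone : lser := lpoly 1.

(* deg x = d, i.e. |x| = q^d (x <> 0) *)
Definition lorder (x : lser) (d : int) : Prop :=
  coef x d != 0 /\ forall m, d < m -> coef x m = 0.

Definition labs_eq (x : lser) (r : rat) : Prop :=
  ((forall m, coef x m = 0) /\ r = 0) \/
  (exists d, lorder x d /\ r = (#|F|%:R : rat) ^ d).

Definition lt1 (x : lser) : Prop := forall m, 0 <= m -> coef x m = 0.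

(* alpha = [0; a_1, a_2, ...] : the continued fraction algorithm produces
   the partial quotients a_1, a_2, ... (a 0 is unused): the complete tails
   t_n = [0; a_{n+1}, a_{n+2}, ...] satisfy t_0 = alpha, |t_n| < 1 and
   t_n = 1 / (a_{n+1} + t_{n+1}). *)
Definition cf_expansion (alpha : lser) (a : nat -> {poly F}) : Prop :=
  exists t : nat -> lser,
    leq_ser (t 0%N) alpha /\ (forall n, lt1 (t n)) /\
    (forall n, leq_ser (lmul (t n) (ladd (lpoly (a n.+1)) (t n.+1))) lone).

End Laurent.

Definition pdeg (F : finFieldType) (p : {poly F}) : int := ((size p).-1)%:Z.

(* Main.v *)
Require Import Defs.
From mathcomp Require Import all_boot all_order all_algebra all_field zify ring.
From Stdlib Require Import Classical.
Import Order.TTheory GRing.Theory Num.Theory.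
Unset Printing Implicit Defensive.
Local Open Scope ring_scope.

Section S.
Context {F : finFieldType}.
Implicit Types x y : lser F.

Definition bnd (c : int -> F) (B : int) := forall m, B < m -> c m = 0.

Lemma bnd_coef x : bnd (coef x) (lval x).
Proof. by move=> m hm; rewrite /coef leNgt hm. Qed.

Lemma bnd_le c B B' : bnd c B -> B <= B' -> bnd c B'.
Proof. move=> h hB m hm; apply: h; lia. Qed.
Arguments bnd_le {c B B'}.

Lemma coef_lcoef x (i : nat) : coef x (lval x - i%:Z) = lcoef x i.
Proof.
rewrite /coef ifT; last by lia.
congr lcoef; lia.
Qed.

Lemma coef_mkL v (f : int -> F) m : (forall m : int, v < m -> f m = 0) -> coef (mkL v f) m = f m.
Proof.
move=> h; rewrite /coef /mkL /=; case: ifP => hm; last first.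
  by rewrite h //; lia.
congr f; lia.
Qed.

Lemma coef_ladd x y m : coef (ladd x y) m = coef x m + coef y m.
Proof.
rewrite coef_mkL // => k hk; rewrite !bnd_coef ?addr0 //; lia.
Qed.

Lemma coef_lopp x m : coef (lopp x) m = - coef x m.
Proof. rewrite coef_mkL // => k hk; rewrite bnd_coef ?oppr0 //. Qed.

Lemma coef_lsub x y m : coef (lsub x y) m = coef x m - coef y m.
Proof. by rewrite coef_ladd coef_lopp. Qed.

Lemma coef_lpoly (p : {poly F}) m :
  coef (lpoly p) m = if 0 <= m then p`_`|m|%N else 0.
Proof.
rewrite coef_mkL // => k hk; case: ifP => // h0.
rewrite nth_default //; case: k hk h0 => // kn; rewrite ltz_nat => /ltnW h _; exact: h.
Qed.

Definition csum (B1 B2 : int) (c d : int -> F) (k : nat) :=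
  \sum_(j < k.+1) c (B1 - j%:Z) * d (B2 - (k - j)%N%:Z).

Lemma csum_base x y (k : nat) :
  coef (lmul x y) (lval x + lval y - k%:Z) = csum (lval x) (lval y) (coef x) (coef y) k.
Proof.
rewrite {1}/coef /= ifT; last by lia.
have -> : absz (lval x + lval y - (lval x + lval y - k%:Z))%R = k by lia.
rewrite /csum; apply: eq_bigr => j _.
by rewrite !coef_lcoef.
Qed.

Lemma csum_neg {B1 B2 c d k} {V W : int} : bnd c V -> bnd d W ->
  V + W < B1 + B2 - k%:Z -> csum B1 B2 c d k = 0.
Proof.
move=> hc hd hk; rewrite /csum big1 // => j _.
have hj := ltn_ord j.
case: (lerP (B1 - j%:Z) V) => h1.
  rewrite (hd _) ?mulr0 //; lia.
by rewrite hc ?mul0r.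
Qed.

Lemma csum_shift1 B1 B2 c d k : bnd c B1 ->
  csum (B1 + 1) B2 c d k.+1 = csum B1 B2 c d k.
Proof.
move=> hc; rewrite /csum big_ord_recl /= hc ?mul0r ?add0r; last by lia.
apply: eq_bigr => j _; rewrite /bump /=.
congr (c _ * d _); lia.
Qed.

Lemma csum_shift2 B1 B2 c d k : bnd d B2 ->
  csum B1 (B2 + 1) c d k.+1 = csum B1 B2 c d k.
Proof.
move=> hd; rewrite /csum big_ord_recr /= subnn hd ?mulr0 ?addr0; last by lia.
apply: eq_bigr => j _ /=.
have hj := ltn_ord j.
congr (c _ * d _); lia.
Qed.

Lemma csum_lift B1 B2 c d k (d1 d2 : nat) : bnd c B1 -> bnd d B2 ->
  csum (B1 + d1%:Z) (B2 + d2%:Z) c d (k + d1 + d2) = csum B1 B2 c d k.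
Proof.
move=> hc hd; elim: d2 => [|n IH].
  rewrite addr0 addn0; elim: d1 => [|n IH]; first by rewrite addr0 addn0.
  have -> : B1 + n.+1%:Z = (B1 + n%:Z) + 1 by lia.
  rewrite addnS csum_shift1 ?IH //; apply: (bnd_le hc); lia.
have -> : B2 + n.+1%:Z = (B2 + n%:Z) + 1 by lia.
rewrite addnS csum_shift2 ?IH //; apply: (bnd_le hd); lia.
Qed.


Lemma coef_lmul_big x y m : lval x + lval y < m -> coef (lmul x y) m = 0.
Proof. by move=> h; rewrite /coef /= leNgt h. Qed.

Lemma coef_lmul_M x y (f1 f2 : nat) m :
  m <= lval x + f1%:Z + (lval y + f2%:Z) ->
  coef (lmul x y) m =
  csum (lval x + f1%:Z) (lval y + f2%:Z) (coef x) (coef y)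
       (absz (lval x + f1%:Z + (lval y + f2%:Z) - m)%R).
Proof.
move=> hm; case: (lerP m (lval x + lval y)) => h.
  have -> : m = lval x + lval y - (absz (lval x + lval y - m)%R)%:Z by lia.
  rewrite csum_base.
  have -> : absz (lval x + f1%:Z + (lval y + f2%:Z) -
    (lval x + lval y - (absz (lval x + lval y - m)%R)%:Z))%R =
    (absz (lval x + lval y - m)%R + f1 + f2)%N by lia.
  by rewrite csum_lift //; apply: bnd_coef.
rewrite coef_lmul_big // (csum_neg (bnd_coef x) (bnd_coef y)) //; lia.
Qed.

Lemma coef_lmul_bnd x y B1 B2 : bnd (coef x) B1 -> bnd (coef y) B2 ->
  (forall k : nat, coef (lmul x y) (B1 + B2 - k%:Z) = csum B1 B2 (coef x) (coef y) k)
  /\ (forall m, B1 + B2 < m -> coef (lmul x y) m = 0).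
Proof.
move=> hx hy.
pose e1 := absz (lval x - B1)%R; pose e2 := absz (lval y - B2)%R.
pose f1 := absz (B1 + e1%:Z - lval x)%R; pose f2 := absz (B2 + e2%:Z - lval y)%R.
have E1 : lval x + f1%:Z = B1 + e1%:Z by rewrite /f1 /e1; lia.
have E2 : lval y + f2%:Z = B2 + e2%:Z by rewrite /f2 /e2; lia.
split.
  move=> k; rewrite (coef_lmul_M x y f1 f2) E1 E2; last by lia.
  have -> : absz (B1 + e1%:Z + (B2 + e2%:Z) - (B1 + B2 - k%:Z))%R = (k + e1 + e2)%N by lia.
  by rewrite csum_lift.
move=> m hm; case: (lerP m (lval x + f1%:Z + (lval y + f2%:Z))) => h.
  by rewrite (coef_lmul_M x y f1 f2) // E1 E2 (csum_neg hx hy) //; lia.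
rewrite coef_lmul_big //; lia.
Qed.


Lemma coef_lone m : coef (lone F) m = (m == 0)%:R.
Proof.
rewrite /lone coef_lpoly coef1; case: ifP => h.
  by congr (_%:R); apply/eqP; case: eqP => e; [lia|]; apply/negP => /eqP; lia.
by case: eqP => // e; move: h; rewrite e.
Qed.

Lemma bnd_lone : bnd (coef (lone F)) 0.
Proof. move=> m hm; rewrite coef_lone; case: eqP => // e; lia. Qed.

Lemma mul1_coef W m : coef (lmul (lone F) W) m = coef W m.
Proof.
have [h1 h2] := coef_lmul_bnd (lone F) W 0 (lval W) bnd_lone (bnd_coef W).
case: (lerP m (lval W)) => hm; last by rewrite h2 ?bnd_coef //; lia.
have -> : m = 0 + lval W - (absz (lval W - m)%R)%:Z by lia.
rewrite h1 /csum big_ord_recl /= big1 ?addr0.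
  by rewrite coef_lone eqxx mul1r subn0 add0r.
move=> j _; rewrite /bump /= coef_lone; case: eqP => e; [lia|by rewrite mul0r].
Qed.

Definition S (N : nat) (B : int) (c : int -> F) : {poly F} :=
  \poly_(k < N) c (B - k%:Z).

Lemma csum_S N B1 B2 c d k : (k < N)%N ->
  csum B1 B2 c d k = (S N B1 c * S N B2 d)`_k.
Proof.
move=> hk; rewrite coefM /csum; apply: eq_bigr => j _.
have hj := ltn_ord j.
rewrite !coef_poly !ifT //; lia.
Qed.

Lemma trunc_mul (p q r : {poly F}) K : (forall i, (i <= K)%N -> p`_i = q`_i) ->
  (p * r)`_K = (q * r)`_K.
Proof.
move=> h; rewrite !coefM; apply: eq_bigr => j _; rewrite h //.
by have := ltn_ord j.
Qed.

Lemma one_part T X W (B : int) N K : 0 <= B ->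
  bnd (coef T) B -> bnd (coef X) B -> bnd (coef W) B ->
  (forall m, coef (lmul T X) m = coef (lone F) m) -> (K < N)%N ->
  ((S N B (coef T) * S N B (coef X)) * S N B (coef W))`_K = coef W (B + B + B - K%:Z).
Proof.
move=> hB bT bX bW hTX hK.
rewrite (trunc_mul _ (S N (B + B) (coef (lone F)))); last first.
  move=> i hi; rewrite -csum_S; last by lia.
  have [h1 _] := coef_lmul_bnd T X B B bT bX.
  rewrite -h1 hTX coef_poly ifT //; lia.
rewrite -csum_S //.
have [h1 _] := coef_lmul_bnd (lone F) W (B + B) B (bnd_le bnd_lone (addr_ge0 hB hB)) bW.
by rewrite -h1 mul1_coef.
Qed.

Lemma step_id T U X Y :
  (forall m, coef (lmul T X) m = coef (lone F) m) ->
  (forall m, coef (lmul U Y) m = coef (lone F) m) ->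
  forall m, coef (lmul (lmul (lsub T U) X) Y) m = coef Y m - coef X m.
Proof.
move=> hT hU m.
pose B : int := (absz (lval T) + absz (lval U) + absz (lval X) + absz (lval Y))%:Z.
have hB : 0 <= B by [].
have bT : bnd (coef T) B by apply: (bnd_le (bnd_coef T)); rewrite /B; lia.
have bU : bnd (coef U) B by apply: (bnd_le (bnd_coef U)); rewrite /B; lia.
have bX : bnd (coef X) B by apply: (bnd_le (bnd_coef X)); rewrite /B; lia.
have bY : bnd (coef Y) B by apply: (bnd_le (bnd_coef Y)); rewrite /B; lia.
have bZ : bnd (coef (lsub T U)) B by move=> k hk; rewrite coef_lsub bT // bU // subr0.
have bZX : bnd (coef (lmul (lsub T U) X)) (B + B) by exact: (coef_lmul_bnd _ _ _ _ bZ bX).2.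
have [h1 h2] := coef_lmul_bnd _ _ _ _ bZX bY.
case: (lerP m (B + B + B)) => hm; last by rewrite h2 // bY ?bX ?subr0 //; lia.
have -> : m = B + B + B - (absz (B + B + B - m)%R)%:Z by lia.
set K := absz _.
rewrite h1 (csum_S K.+1) //.
rewrite (trunc_mul _ ((S K.+1 B (coef (lsub T U))) * S K.+1 B (coef X))); last first.
  move=> i hi; rewrite -csum_S; last by lia.
  have [g1 _] := coef_lmul_bnd _ _ _ _ bZ bX.
  rewrite -g1 coef_poly ifT //; lia.
have -> : S K.+1 B (coef (lsub T U)) = S K.+1 B (coef T) - S K.+1 B (coef U).
  by apply/polyP => i; rewrite coefB !coef_poly; case: ifP; rewrite ?subr0 // coef_lsub.
have -> : (S K.+1 B (coef T) - S K.+1 B (coef U)) * S K.+1 B (coef X) * S K.+1 B (coef Y)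
  = S K.+1 B (coef T) * S K.+1 B (coef X) * S K.+1 B (coef Y)
    - S K.+1 B (coef U) * S K.+1 B (coef Y) * S K.+1 B (coef X) by ring.
by rewrite coefB !(one_part _ _ _ B).
Qed.

Lemma lorder_ext x y d : (forall m, coef x m = coef y m) -> lorder x d -> lorder y d.
Proof. by move=> e [h1 h2]; split; [rewrite -e | move=> m hm; rewrite -e h2]. Qed.

Lemma lorder_oppE x y d : (forall m, coef y m = - coef x m) -> lorder x d -> lorder y d.
Proof.
move=> e [h1 h2]; split; first by rewrite e oppr_eq0.
by move=> m hm; rewrite e h2 ?oppr0.
Qed.

Lemma lorder_uniq x d e : lorder x d -> lorder x e -> d = e.
Proof.
move=> [h1 h2] [g1 g2]; case: (ltgtP d e) => // h.
  by move: g1; rewrite h2 ?eqxx.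
by move: h1; rewrite g2 ?eqxx.
Qed.

Lemma lorder_bnd x d : lorder x d -> bnd (coef x) d.
Proof. by case. Qed.

Lemma exists_order x : (exists m, coef x m != 0) -> exists d, lorder x d.
Proof.
move=> [m hm].
have hle : m <= lval x by case: lerP hm => // h; rewrite bnd_coef ?eqxx.
have exP : exists k, lcoef x k != 0.
  by exists (absz (lval x - m)%R); move: hm; rewrite /coef hle.
case: (ex_minnP exP) => k0 hk0 hmin.
exists (lval x - k0%:Z); split; first by rewrite coef_lcoef.
move=> m' hm'; case: (lerP m' (lval x)) => h; last by rewrite bnd_coef.
have -> : m' = lval x - (absz (lval x - m')%R)%:Z by lia.
rewrite coef_lcoef; apply/eqP; apply/negPn/negP => hn.
have := hmin _ hn; lia.
Qed.

Lemma lorder_mul x y d e : lorder x d -> lorder y e -> lorder (lmul x y) (d + e).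
Proof.
move=> hx hy; have [h1 h2] := coef_lmul_bnd _ _ _ _ (lorder_bnd _ _ hx) (lorder_bnd _ _ hy).
split; last exact: h2.
have := h1 0%N; rewrite subr0 => ->.
rewrite /csum big_ord1 /= !subr0 mulf_neq0 //; [exact: hx.1|exact: hy.1].
Qed.

Lemma lorder_cancel x y e f : lorder y e -> lorder (lmul x y) f -> lorder x (f - e).
Proof.
move=> hy hxy.
have [d hd] : exists d, lorder x d.
  apply: exists_order; apply/not_all_not_ex => hall.
  have bx : bnd (coef x) (f - e - 1).
    by move=> m _; apply/eqP; apply/negPn/negP => /(fun h => hall m h).
  have [_ h2] := coef_lmul_bnd _ _ _ _ bx (lorder_bnd _ _ hy).
  by move: hxy.1; rewrite h2 ?eqxx //; lia.
have := lorder_uniq _ _ _ (lorder_mul _ _ _ _ hd hy) hxy.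
by move=> <-; rewrite addrK.
Qed.

Lemma lorder_add x y d : lorder x d -> (forall m, d <= m -> coef y m = 0) ->
  lorder (ladd x y) d.
Proof.
move=> [h1 h2] hy; split; first by rewrite coef_ladd hy // addr0.
by move=> m hm; rewrite coef_ladd h2 // hy ?addr0 //; exact: ltW.
Qed.

Lemma lorder_lpoly (p : {poly F}) : p != 0 -> lorder (lpoly p) (pdeg p).
Proof.
move=> hp; have hs : (0 < size p)%N by rewrite size_poly_gt0.
split.
  rewrite coef_lpoly /pdeg /=; change (lead_coef p != 0); by rewrite lead_coef_eq0.
move=> m hm; rewrite coef_lpoly; case: ifP => // h0.
rewrite nth_default //; move: hm h0 hs; rewrite /pdeg; set s := size p; lia.
Qed.

Lemma lorder_X (A : {poly F}) T : (1 < size A)%N -> lt1 T ->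
  lorder (ladd (lpoly A) T) (pdeg A).
Proof.
move=> hA hT; apply: lorder_add.
  by apply: lorder_lpoly; rewrite -size_poly_gt0; lia.
move=> m hm; apply: hT; move: hm; rewrite /pdeg; lia.
Qed.

Lemma main_ind n : forall (a b : nat -> {poly F}) (t u : nat -> lser F),
  (forall i, 1 < size (a i.+1))%N -> (forall i, 1 < size (b i.+1))%N ->
  (forall j, lt1 (t j)) -> (forall j, lt1 (u j)) ->
  (forall j, leq_ser (lmul (t j) (ladd (lpoly (a j.+1)) (t j.+1))) (lone F)) ->
  (forall j, leq_ser (lmul (u j) (ladd (lpoly (b j.+1)) (u j.+1))) (lone F)) ->
  (forall i, (1 <= i <= n)%N -> a i = b i) -> a n.+1 != b n.+1 ->
  lorder (lsub (t 0%N) (u 0%N))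
    (- 2 * (\sum_(1 <= i < n.+1) pdeg (a i))
                        - pdeg (a n.+1) - pdeg (b n.+1)
                        + pdeg (a n.+1 - b n.+1)).
Proof.
elim: n => [|n IH] a b t u ha hb ht hu hta hub heq hne.
  have hX := lorder_X (a 1%N) (t 1%N) (ha 0%N) (ht 1%N).
  have hY := lorder_X (b 1%N) (u 1%N) (hb 0%N) (hu 1%N).
  have hD : lorder (lmul (lmul (lsub (t 0%N) (u 0%N)) (ladd (lpoly (a 1%N)) (t 1%N)))
                     (ladd (lpoly (b 1%N)) (u 1%N))) (pdeg (a 1%N - b 1%N)).
    apply: (lorder_ext (ladd (lpoly (b 1%N - a 1%N)) (lsub (u 1%N) (t 1%N)))).
      move=> m; rewrite (step_id _ _ _ _ (hta 0%N) (hub 0%N)) !coef_ladd !coef_lopp !coef_lpoly.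
      case: ifP => _; rewrite ?coefB; ring.
    have -> : pdeg (a 1%N - b 1%N) = pdeg (b 1%N - a 1%N) by rewrite /pdeg -opprB size_opp.
    apply: lorder_add; first by apply: lorder_lpoly; rewrite subr_eq0 eq_sym.
    move=> m hm; rewrite coef_lsub (hu 1%N) ?(ht 1%N) ?subr0 //; move: hm; rewrite /pdeg; lia.
  have := lorder_cancel _ _ _ _ hX (lorder_cancel _ _ _ _ hY hD).
  rewrite big_geq //; set E := (X in lorder _ X) => h; set E' := (X in lorder _ X).
  by have -> : E' = E by rewrite /E /E'; lia.
have e1 : a 1%N = b 1%N by apply: heq.
have hX := lorder_X (a 1%N) (t 1%N) (ha 0%N) (ht 1%N).
have hY := lorder_X (b 1%N) (u 1%N) (hb 0%N) (hu 1%N).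
have heq' : forall i, (1 <= i <= n)%N -> a i.+1 = b i.+1 by move=> i hi; apply: heq; lia.
have hI := IH (fun i => a i.+1) (fun i => b i.+1) (fun i => t i.+1) (fun i => u i.+1)
  (fun i => ha i.+1) (fun i => hb i.+1) (fun i => ht i.+1) (fun i => hu i.+1)
  (fun i => hta i.+1) (fun i => hub i.+1) heq' hne.
simpl in hI.
have hD : lorder (lmul (lmul (lsub (t 0%N) (u 0%N)) (ladd (lpoly (a 1%N)) (t 1%N)))
                     (ladd (lpoly (b 1%N)) (u 1%N))) 
   (- 2 * (\sum_(1 <= i < n.+1) pdeg (a i.+1))
                        - pdeg (a n.+2) - pdeg (b n.+2)
                        + pdeg (a n.+2 - b n.+2)).
  apply: (lorder_oppE _ _ _ _ hI) => m.
  rewrite (step_id _ _ _ _ (hta 0%N) (hub 0%N)) !coef_ladd !coef_lopp e1; ring.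
have := lorder_cancel _ _ _ _ hX (lorder_cancel _ _ _ _ hY hD).
have es : \sum_(1 <= i < n.+2) pdeg (a i) = pdeg (a 1%N) + \sum_(1 <= i < n.+1) pdeg (a i.+1) by rewrite big_nat_recl.
rewrite es -e1; set E := (X in lorder _ X) => h; set E' := (X in lorder _ X).
by have -> : E' = E by rewrite /E /E'; lia.
Qed.

End S.

Theorem lemma2p3 (F : finFieldType) (alpha beta : lser F)
    (a b : nat -> {poly F}) (n : nat) :
  (forall i, (1 <= i)%N -> (1 < size (a i))%N) ->
  (forall i, (1 <= i)%N -> (1 < size (b i))%N) ->
  cf_expansion alpha a -> cf_expansion beta b ->
  (forall i, (1 <= i <= n)%N -> a i = b i) ->
  a n.+1 != b n.+1 ->
  labs_eq (lsub alpha beta)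
    ((#|F|%:R : rat) ^ (- 2 * (\sum_(1 <= i < n.+1) pdeg (a i))
                        - pdeg (a n.+1) - pdeg (b n.+1)
                        + pdeg (a n.+1 - b n.+1))).
Proof.
move=> ha hb [t [t0 [ht hta]]] [u [u0 [hu hub]]] heq hne.
have h := main_ind n a b t u (fun i => ha i.+1 isT) (fun i => hb i.+1 isT)
  ht hu hta hub heq hne.
right; eexists; split; last reflexivity.
apply: (lorder_ext _ _ _ _ h) => m.
by rewrite !coef_lsub t0 u0.
Qed.
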